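(* Let $p,q\in(0,1/2)$ with $\frac{\log p}{\log q}\notin\mathbb Q$. Then the system $\{S_1,S_2,S_3,S_4\}$, where $S_1(x)=px$, $S_2(x)=qx$, $S_3(x)=px+1-p$, $S_4(x)=qx+1-q$, does not have the weak separation property.
   Context: For a system $\{S_1,\dots,S_m\}$ of contracting similarities, let $I^*$ be the set of finite words over $\{1,\dots,m\}$ and $S_{\mathbf i}=S_{i_1}\circ\cdots\circ S_{i_n}$ for $\mathbf i=i_1\dots i_n$. The weak separation property (WSP, in the sense of Lau and Ngai) holds, equivalently (Zerner), if and only if the identity map is not an accumulation point of the family $\{S_{\mathbf j}^{-1}S_{\mathbf i}:\mathbf i,\mathbf j\in I^*\}\setminus\{\mathrm{Id}\}$ (in the topology of similarity maps, e.g. convergence of the coefficients of the affine maps). *)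

(* Defs.v *)
From Stdlib Require Import Reals List QArith.
Open Scope R_scope.

(* A similarity of the real line x |-> a x + b, represented by its
   coefficients (a, b). *)
Definition sim := (R * R)%type.

Definition sim_apply (f : sim) (x : R) : R := fst f * x + snd f.

Definition sim_id : sim := (1, 0).

Definition sim_comp (f g : sim) : sim :=
  (fst f * fst g, fst f * snd g + snd f).

Definition sim_inv (f : sim) : sim := (/ fst f, - (snd f / fst f)).

(* An IFS {S_1,...,S_m} is a list of similarities; index i (0-based) picks S_{i+1}. *)
Definition IFS := list sim.

Definition is_word (S : IFS) (w : list nat) : Prop :=
  Forall (fun i => (i < length S)%nat) w.

Fixpoint sim_word (S : IFS) (w : list nat) : sim :=
  match w with
  | nil => sim_id
  | i :: w' => sim_comp (nth i S sim_id) (sim_word S w')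
  end.

Definition in_family (S : IFS) (g : sim) : Prop :=
  exists i j, is_word S i /\ is_word S j /\
    g = sim_comp (sim_inv (sim_word S j)) (sim_word S i).

(* Weak separation property, via Zerner's characterization: the identity is
   not an accumulation point of the family minus the identity, in the topology
   of convergence of the coefficients. *)
Definition WSP (S : IFS) : Prop :=
  exists eps : R, 0 < eps /\
    forall g : sim, in_family S g -> g <> sim_id ->
      eps <= Rabs (fst g - 1) \/ eps <= Rabs (snd g).

(* Main.v *)
Require Import Defs.
From Stdlib Require Import Reals List QArith.
From Stdlib Require Import ZArith Qreals Lia Lra.
Open Scope R_scope.

Definition SS (p q : R) : IFS := (p, 0) :: (q, 0) :: (p, 1 - p) :: (q, 1 - q) :: nil.

Lemma word_rep1 p q m : sim_word (SS p q) (repeat 1%nat m) = (q ^ m, 0).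
Proof.
  induction m as [|m IH]; [reflexivity|].
  simpl repeat. simpl sim_word. rewrite IH. unfold sim_comp; simpl. f_equal; ring.
Qed.

Lemma word_rep p q n m : sim_word (SS p q) (repeat 0%nat n ++ repeat 1%nat m) = (p ^ n * q ^ m, 0).
Proof.
  induction n as [|n IH].
  - simpl. rewrite word_rep1. f_equal; ring.
  - simpl repeat. rewrite <- app_comm_cons. simpl sim_word. rewrite IH.
    unfold sim_comp; simpl. f_equal; ring.
Qed.

Lemma word_ok p q n m : is_word (SS p q) (repeat 0%nat n ++ repeat 1%nat m).
Proof.
  unfold is_word. apply Forall_forall. intros x Hx.
  apply in_app_or in Hx. simpl. destruct Hx as [Hx|Hx]; apply repeat_spec in Hx; lia.
Qed.

Lemma pow_exp x n : 0 < x -> x ^ n = exp (INR n * ln x).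
Proof. intros. rewrite <- ln_pow by lra. rewrite exp_ln; auto. apply pow_lt; auto. Qed.

Lemma Z_split (i : Z) : exists n1 n2 : nat, IZR i = INR n1 - INR n2.
Proof.
  destruct i as [|k|k].
  - exists 0%nat, 0%nat. simpl. lra.
  - exists (Pos.to_nat k), 0%nat. simpl. rewrite INR_IZR_INZ, positive_nat_Z. lra.
  - exists 0%nat, (Pos.to_nat k). simpl. rewrite INR_IZR_INZ, positive_nat_Z.
    rewrite <- Pos2Z.opp_pos, opp_IZR. lra.
Qed.

Lemma fam_elem p q (i j : Z) : 0 < p -> 0 < q ->
  exists g, in_family (SS p q) g /\
    fst g = exp (- (IZR i * (- ln p) + IZR j * (- ln q))) /\ snd g = 0.
Proof.
  intros Hp Hq.
  destruct (Z_split i) as [n1 [n2 Hi]]. destruct (Z_split j) as [m1 [m2 Hj]].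
  exists (sim_comp (sim_inv (sim_word (SS p q) (repeat 0%nat n2 ++ repeat 1%nat m2)))
                   (sim_word (SS p q) (repeat 0%nat n1 ++ repeat 1%nat m1))).
  split; [|split].
  - exists (repeat 0%nat n1 ++ repeat 1%nat m1), (repeat 0%nat n2 ++ repeat 1%nat m2).
    split; [apply word_ok|split; [apply word_ok|reflexivity]].
  - rewrite !word_rep. unfold sim_comp, sim_inv; simpl.
    rewrite Hi, Hj, !(pow_exp p), !(pow_exp q) by auto.
    replace (- ((INR n1 - INR n2) * - ln p + (INR m1 - INR m2) * - ln q))
      with ((INR n1 * ln p + INR m1 * ln q) + - (INR n2 * ln p + INR m2 * ln q)) by ring.
    rewrite exp_plus, exp_Ropp, !exp_plus.
    assert (exp (INR n2 * ln p) > 0) by apply exp_pos.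
    assert (exp (INR m2 * ln q) > 0) by apply exp_pos.
    field. split; lra.
  - rewrite !word_rep. unfold sim_comp, sim_inv; simpl.
    assert (0 < p ^ n2 * q ^ m2) by (apply Rmult_lt_0_compat; apply pow_lt; auto).
    unfold Rdiv. ring.
Qed.

Theorem proposition9 (p q : R) :
  0 < p < 1 / 2 -> 0 < q < 1 / 2 ->
  (~ exists r : Q, ln p / ln q = Q2R r) ->
  ~ WSP ((p, 0) :: (q, 0) :: (p, 1 - p) :: (q, 1 - q) :: nil).
Proof.
  intros Hp Hq Hirr [eps [Heps HW]].
  set (a := - ln p). set (b := - ln q).
  assert (Ha : 0 < a).
  { unfold a. assert (ln p < ln 1) by (apply ln_increasing; lra). rewrite ln_1 in H. lra. }
  assert (Hb : 0 < b).
  { unfold b. assert (ln q < ln 1) by (apply ln_increasing; lra). rewrite ln_1 in H. lra. }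
  assert (Hbound : forall i j : Z, 0 < IZR i * a + IZR j * b ->
            eps <= 1 - exp (- (IZR i * a + IZR j * b))).
  { intros i j Hz. destruct (fam_elem p q i j) as [g [Hg [H1 H2]]]; try lra.
    assert (E : exp (- (IZR i * a + IZR j * b)) < 1).
    { rewrite <- exp_0. apply exp_increasing. lra. }
    assert (Hne : g <> sim_id).
    { intro Hgid. rewrite Hgid in H1. simpl in H1. unfold a, b in E. lra. }
    destruct (HW g Hg Hne) as [Hc|Hc].
    - rewrite H1 in Hc. unfold a, b. rewrite Rabs_left in Hc; unfold a, b in E; lra.
    - rewrite H2, Rabs_R0 in Hc. lra. }
  assert (Heps1 : eps < 1).
  { specialize (Hbound 1%Z 0%Z). simpl in Hbound.
    assert (0 < exp (- (1 * a + 0 * b))) by apply exp_pos. 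
    assert (eps <= 1 - exp (- (1 * a + 0 * b))) by (apply Hbound; lra). lra. }
  set (d := - ln (1 - eps)).
  assert (Hd : 0 < d).
  { unfold d. assert (ln (1 - eps) < ln 1) by (apply ln_increasing; lra). rewrite ln_1 in H. lra. }
  assert (Hlow : forall i j : Z, 0 < IZR i * a + IZR j * b -> d <= IZR i * a + IZR j * b).
  { intros i j Hz. specialize (Hbound i j Hz). unfold d.
    destruct (Rle_dec (- ln (1 - eps)) (IZR i * a + IZR j * b)) as [|Hn]; auto.
    exfalso. apply Rnot_le_lt in Hn. assert (Hl : ln (1 - eps) < - (IZR i * a + IZR j * b)) by lra.
    apply exp_increasing in Hl. rewrite exp_ln in Hl by lra. lra. }
  assert (Hdesc : forall k : nat, exists i1 j1 i2 j2 : Z,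
     (i1 * j2 - i2 * j1 = 1)%Z /\ 0 < IZR i1 * a + IZR j1 * b /\
     0 < IZR i2 * a + IZR j2 * b /\
     IZR i1 * a + IZR j1 * b + (IZR i2 * a + IZR j2 * b) <= a + b - INR k * d).
  { induction k as [|k IH].
    - exists 1%Z, 0%Z, 0%Z, 1%Z. simpl. repeat split; try lia; lra.
    - destruct IH as [i1 [j1 [i2 [j2 [Hdet [Hx [Hy Hs]]]]]]].
      rewrite S_INR.
      set (x := IZR i1 * a + IZR j1 * b) in *.
      set (y := IZR i2 * a + IZR j2 * b) in *.
      destruct (Rtotal_order x y) as [Hlt|[Heq|Hgt]].
      + exists i1, j1, (i2 - i1)%Z, (j2 - j1)%Z.
        rewrite !minus_IZR. repeat split; try lia.
        * exact Hx.
        * unfold x, y in *. lra.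
        * assert (d <= x) by (apply Hlow; exact Hx). unfold x, y in *. lra.
      + exfalso.
        assert (E : IZR (i1 - i2) * a = IZR (j2 - j1) * b) by (rewrite !minus_IZR; unfold x, y in *; lra).
        destruct (Z.eq_dec i1 i2) as [Ei|Ni].
        * subst i2. rewrite Z.sub_diag in E. simpl in E.
          assert (IZR (j2 - j1) = 0) by nra.
          apply eq_IZR_R0 in H. lia.
        * apply Hirr. exists (inject_Z (j2 - j1) / inject_Z (i1 - i2))%Q.
          rewrite Q2R_div.
          -- unfold Q2R; simpl. 
             assert (Hnz : IZR (i1 - i2) <> 0) by (apply not_0_IZR; lia).
             replace (ln p) with (- a) by (unfold a; ring).
             replace (ln q) with (- b) by (unfold b; ring).
             field_simplify_eq; [nra|split; [exact Hnz|lra]].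
          -- unfold Qeq; simpl. lia.
      + exists (i1 - i2)%Z, (j1 - j2)%Z, i2, j2.
        rewrite !minus_IZR. repeat split; try lia.
        * unfold x, y in *. lra.
        * exact Hy.
        * assert (d <= y) by (apply Hlow; exact Hy). unfold x, y in *. lra. }
  destruct (archimed ((a + b) / d)) as [Hup _].
  destruct (Hdesc (Z.to_nat (up ((a + b) / d)))) as [i1 [j1 [i2 [j2 [_ [Hx [Hy Hs]]]]]]].
  rewrite INR_IZR_INZ, Z2Nat.id in Hs.
  - assert (IZR (up ((a + b) / d)) * d > a + b).
    { apply Rmult_gt_compat_r with (r := d) in Hup; [|lra].
      unfold Rdiv in Hup. rewrite Rmult_assoc, Rinv_l, Rmult_1_r in Hup; lra. }
    lra.
  - apply le_IZR. assert (0 < (a + b) / d) by (apply Rdiv_lt_0_compat; lra). lra.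
Qed.
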